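(* Let $\mathcal{X}_V,\mathcal{X}_L$ be finite sets, $\mathcal{P}_M$ a joint distribution on $\mathcal{X}_V\times\mathcal{X}_L$ with everywhere positive marginals $\mathcal{P}_V,\mathcal{P}_L$, and let each sample $x$ have a ground-truth label $y(x)$. Let $\alpha=\mathbb{E}_{(x_v,x_l)\sim\mathcal{P}_M}\mathbb{1}[y(x_v)\ne y(x_l)]$, let $\mathcal{P}_T(x_v,x_v')=\mathbb{E}_{x_l\sim\mathcal{P}_L}\mathcal{P}_M(x_v|x_l)\mathcal{P}_M(x_v'|x_l)$ with $\mathcal{P}_M(x_v|x_l)=\mathcal{P}_M(x_v,x_l)/\mathcal{P}_L(x_l)$, and define $\alpha_T=\sum_{x_v,x_v'\in\mathcal{X}_V}\mathcal{P}_T(x_v,x_v')\,\mathbb{1}[y(x_v)\ne y(x_v')]$. Then $\alpha\ge\frac12\alpha_T$. *)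

(* Defs.v *)
From mathcomp Require Import all_boot all_order all_algebra.
Set Implicit Arguments. Unset Strict Implicit. Unset Printing Implicit Defensive.
Import Order.TTheory GRing.Theory Num.Theory.
Local Open Scope ring_scope.

Section Defs.
Variables (R : realFieldType) (XV XL : finType).
Variable PM : XV -> XL -> R.

Definition PV (xv : XV) : R := \sum_(xl : XL) PM xv xl.
Definition PL (xl : XL) : R := \sum_(xv : XV) PM xv xl.

Definition is_joint_distr : Prop :=
  (forall xv xl, 0 <= PM xv xl) /\ \sum_(xv : XV) \sum_(xl : XL) PM xv xl = 1.

Definition condM (xv : XV) (xl : XL) : R := PM xv xl / PL xl.

Definition PT (xv xv' : XV) : R :=
  \sum_(xl : XL) PL xl * (condM xv xl * condM xv' xl).

Variables (Y : eqType) (yV : XV -> Y) (yL : XL -> Y).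

Definition alpha : R :=
  \sum_(xv : XV) \sum_(xl : XL) PM xv xl * (yV xv != yL xl)%:R.

Definition alphaT : R :=
  \sum_(xv : XV) \sum_(xv' : XV) PT xv xv' * (yV xv != yV xv')%:R.
End Defs.

(* Main.v *)
Require Import Defs.
From mathcomp Require Import all_boot all_order all_algebra.
From mathcomp Require Import ring.
Import Order.TTheory GRing.Theory Num.Theory.
Local Open Scope ring_scope.

Lemma ind_tri (R : realFieldType) (Y : eqType) (x y z : Y) :
  (x != y)%:R <= (x != z)%:R + (y != z)%:R :> R.
Proof.
case: (eqVneq x z) => [e1|hx]; case: (eqVneq y z) => [e2|hy]; subst => /=.
- by rewrite eqxx addr0.
- by rewrite eq_sym hy add0r.
- by rewrite hx addr0.
- by rewrite addrC ler_wpDl ?ler0n ?lern1 ?leq_b1.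
Qed.

Theorem propositionA1 (R : realFieldType) (XV XL : finType) (PM : XV -> XL -> R)
  (Y : eqType) (yV : XV -> Y) (yL : XL -> Y) :
  is_joint_distr PM ->
  (forall xv, 0 < PV PM xv) ->
  (forall xl, 0 < PL PM xl) ->
  alphaT PM yV / 2 <= alpha PM yV yL.
Proof.
move=> [PM0 _] _ PL0.
set c := fun v v' l => PM v l * PM v' l / PL PM l.
set a := fun v l => ((yV v != yL l)%:R : R).
have c0 v v' l : 0 <= c v v' l.
  by rewrite /c !mulr_ge0 // invr_ge0 ltW.
have step : alphaT PM yV <= \sum_v \sum_v' \sum_l c v v' l * (a v l + a v' l).
  rewrite /alphaT; apply: ler_sum => v _; apply: ler_sum => v' _.
  rewrite /PT mulr_suml; apply: ler_sum => l _.
  have -> : PL PM l * (condM PM v l * condM PM v' l) = c v v' l.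
    rewrite /c /condM; have := PL0 l; move: (PL PM l) => p hp.
    by field; rewrite gt_eqF.
  by rewrite ler_wpM2l // ind_tri.
have S1 : \sum_v \sum_v' \sum_l c v v' l * a v l = alpha PM yV yL.
  rewrite /alpha; apply: eq_bigr => v _.
  rewrite exchange_big /=; apply: eq_bigr => l _.
  rewrite -mulr_suml.
  have -> : \sum_v' c v v' l = PM v l.
    rewrite /c -mulr_suml -mulr_sumr -/(PL PM l) -mulrA mulfV ?mulr1 //.
    by rewrite gt_eqF.
  by rewrite /a.
have S2 : \sum_v \sum_v' \sum_l c v v' l * a v' l
          = \sum_v \sum_v' \sum_l c v v' l * a v l.
  rewrite exchange_big /=; apply: eq_bigr => v _; apply: eq_bigr => v' _.
  by apply: eq_bigr => l _; rewrite /c (mulrC (PM v' l)).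
have E : \sum_v \sum_v' \sum_l c v v' l * (a v l + a v' l) = 2 * alpha PM yV yL.
  have -> : 2 * alpha PM yV yL = alpha PM yV yL + alpha PM yV yL by ring.
  rewrite -S1 -{2}S2 -big_split /=.
  apply: eq_bigr => v _; rewrite -big_split /=; apply: eq_bigr => v' _.
  by rewrite -big_split /=; apply: eq_bigr => l _; rewrite mulrDr.
rewrite ler_pdivrMr ?ltr0n // mulrC; by rewrite -E.
Qed.
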